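(* For $M,N\in\Lambda$ and $A\in\mathcal A$, if $A\sqsubseteq M$ and $M\to_{\mathsf v}N$ then $A\sqsubseteq N$.
   Context: $\lambda$-terms and values are $M,N::=V\mid MN$, $V::=x\mid\lambda x.M$, up to $\alpha$-conversion. Rules: $(\beta_v)$ $(\lambda x.M)V\to M\{x:=V\}$ if $V$ is a value; $(\sigma_1)$ $(\lambda x.M)NP\to(\lambda x.MP)N$ if $x\notin\mathrm{FV}(P)$; $(\sigma_3)$ $V((\lambda x.M)N)\to(\lambda x.VM)N$ if $V$ is a value and $x\notin\mathrm{FV}(V)$. $\to_{\mathsf v}$ is the contextual closure of their union. $\Lambda_\bot$ is the set of $\lambda$-terms possibly containing a constant $\bot$; $\sqsubseteq$ is the smallest context-closed preorder on $\Lambda_\bot$ with $\bot\sqsubseteq x$ and $\bot\sqsubseteq\lambda x.M$ for all variables $x$ and $M\in\Lambda_\bot$. Approximants $\mathcal A$ ($k\ge0$): $A::=B\mid C$; $B::=x\mid\lambda x.A\mid\bot\mid xBA_1\cdots A_k$; $C::=(\lambda x.A)(yBA_1\cdots A_k)$. *)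

(* Defs.v *)
(* Lambda-terms with an optional constant Bot, in de Bruijn
   notation (so terms are identified up to alpha-conversion). *)
From Stdlib Require Import Arith.

Inductive term : Type :=
| Var : nat -> term
| Lam : term -> term
| App : term -> term -> term
| Bot : term.

(* Lambda (terms without Bot) *)
Fixpoint no_bot (t : term) : Prop :=
  match t with
  | Var _ => True
  | Lam t => no_bot t
  | App t u => no_bot t /\ no_bot u
  | Bot => False
  end.

Definition is_value (t : term) : Prop :=
  match t with
  | Var _ | Lam _ => True
  | _ => False
  end.

Fixpoint lift (k c : nat) (t : term) : term :=
  match t with
  | Var n => if n <? c then Var n else Var (n + k)
  | Lam t => Lam (lift k (S c) t)
  | App t u => App (lift k c t) (lift k c u)
  | Bot => Bot
  end.

Fixpoint subst_at (k : nat) (s : term) (t : term) : term :=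
  match t with
  | Var n => if n <? k then Var n
             else if n =? k then lift k 0 s
             else Var (n - 1)
  | Lam t => Lam (subst_at (S k) s t)
  | App t u => App (subst_at k s t) (subst_at k s u)
  | Bot => Bot
  end.

(* M{x:=V} where x is the binder of Lam M *)
Definition subst0 (M V : term) : term := subst_at 0 V M.

(* One-step v-reduction: contextual closure of beta_v, sigma_1, sigma_3.
   Side conditions x \notin FV(P) / FV(V) are automatic with lifting. *)
Inductive red_v : term -> term -> Prop :=
| r_beta_v : forall M V, is_value V -> red_v (App (Lam M) V) (subst0 M V)
| r_sigma1 : forall M N P,
    red_v (App (App (Lam M) N) P) (App (Lam (App M (lift 1 0 P))) N)
| r_sigma3 : forall V M N, is_value V ->
    red_v (App V (App (Lam M) N)) (App (Lam (App (lift 1 0 V) M)) N)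
| r_lam : forall M M', red_v M M' -> red_v (Lam M) (Lam M')
| r_appl : forall M M' N, red_v M M' -> red_v (App M N) (App M' N)
| r_appr : forall M N N', red_v N N' -> red_v (App M N) (App M N').

Inductive approx_le : term -> term -> Prop :=
| le_refl : forall M, approx_le M M
| le_trans : forall M N P, approx_le M N -> approx_le N P -> approx_le M P
| le_bot_var : forall x, approx_le Bot (Var x)
| le_bot_lam : forall M, approx_le Bot (Lam M)
| le_lam : forall M N, approx_le M N -> approx_le (Lam M) (Lam N)
| le_appl : forall M M' N, approx_le M M' -> approx_le (App M N) (App M' N)
| le_appr : forall M N N', approx_le N N' -> approx_le (App M N) (App M N').

(* Approximants:
   A ::= B | C
   B ::= x | \x.A | Bot | x B A1 ... Ak
   C ::= (\x.A)(y B A1 ... Ak)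
   is_hd t  means  t = x B A1 ... Ak  (k >= 0). *)
Inductive is_A : term -> Prop :=
| A_B : forall t, is_B t -> is_A t
| A_C : forall t, is_C t -> is_A t
with is_B : term -> Prop :=
| B_var : forall x, is_B (Var x)
| B_lam : forall a, is_A a -> is_B (Lam a)
| B_bot : is_B Bot
| B_hd : forall t, is_hd t -> is_B t
with is_hd : term -> Prop :=
| hd_base : forall x b, is_B b -> is_hd (App (Var x) b)
| hd_app : forall t a, is_hd t -> is_A a -> is_hd (App t a)
with is_C : term -> Prop :=
| C_intro : forall a t, is_A a -> is_hd t -> is_C (App (Lam a) t).

(* Main.v *)
Require Import Defs.

Inductive le' : term -> term -> Prop :=
| s_bot_bot : le' Bot Bot
| s_bot_var x : le' Bot (Var x)
| s_bot_lam M : le' Bot (Lam M)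
| s_var x : le' (Var x) (Var x)
| s_lam M N : le' M N -> le' (Lam M) (Lam N)
| s_app M M' N N' : le' M M' -> le' N N' -> le' (App M N) (App M' N').

Lemma le'_refl t : le' t t.
Proof. induction t; constructor; auto. Qed.

Lemma le'_trans a b c : le' a b -> le' b c -> le' a c.
Proof.
  intros H; revert c; induction H; intros c H2; inversion H2; subst;
  try constructor; eauto.
Qed.

Lemma approx_to_le' a b : approx_le a b -> le' a b.
Proof.
  induction 1; try constructor; auto using le'_refl; eauto using le'_trans.
Qed.

Lemma le'_to_approx a b : le' a b -> approx_le a b.
Proof.
  induction 1; try constructor; auto.
  apply le_trans with (App M' N); constructor; auto.
Qed.

Lemma hd_app t : is_hd t -> exists t1 t2, t = App t1 t2.
Proof. destruct 1; eauto. Qed.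

Lemma hd_A t : is_hd t -> is_A t.
Proof. intros; apply A_B, B_hd; auto. Qed.

Lemma A_app t u : is_A (App t u) ->
  (exists x, t = Var x /\ is_B u) \/ (is_hd t /\ is_A u)
  \/ (exists a, t = Lam a /\ is_A a /\ is_hd u).
Proof.
  intros H; inversion H; subst.
  - inversion H0; subst. inversion H1; subst; eauto.
  - inversion H0; subst; eauto 10.
Qed.

Lemma le'_app_val t u : le' (App t u) t -> False.
Proof. Abort.

Ltac bad := match goal with H : le' _ _ |- _ => solve [inversion H] end.

Lemma hd_inv t u : is_hd (App t u) ->
  (exists x, t = Var x /\ is_B u) \/ (is_hd t /\ is_A u).
Proof. intros H; inversion H; subst; eauto. Qed.

Lemma key M N : red_v M N -> forall A, is_A A -> le' A M -> le' A N.
Proof.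
  induction 1; intros A HA HL.
  - inversion HL as [| | | | |a1 b1 a2 b2 H1 H2]; subst. apply A_app in HA.
    destruct HA as [[x [-> _]]|[[Hh _]|[a [-> [_ Hh]]]]].
    + bad.
    + destruct (hd_app _ Hh) as [? [? ->]]. bad.
    + destruct (hd_app _ Hh) as [? [? ->]]. destruct V; simpl in H; try contradiction; bad.
  - inversion HL as [| | | | |a1 b1 a2 b2 H1 H2]; subst.
    inversion H1 as [| | | | |c1 d1 c2 d2 H3 H4]; subst. apply A_app in HA.
    destruct HA as [[x [? _]]|[[Hh _]|[a [? [_ Hh]]]]]; try discriminate.
    apply hd_inv in Hh.
    destruct Hh as [[x [-> _]]|[Hh _]].
    + bad.
    + destruct (hd_app _ Hh) as [? [? ->]]. bad.
  - inversion HL as [| | | | |a1 b1 a2 b2 H1 H2]; subst.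
    inversion H2 as [| | | | |c1 d1 c2 d2 H3 H4]; subst. apply A_app in HA.
    destruct HA as [[x [-> HB]]|[[Hh _]|[a [-> [_ Hh]]]]].
    + inversion HB as [| | |t Ht]; subst. apply hd_inv in Ht.
      destruct Ht as [[x' [-> _]]|[Hh _]].
      * bad.
      * destruct (hd_app _ Hh) as [? [? ->]]. bad.
    + destruct (hd_app _ Hh) as [? [? ->]]. destruct V; simpl in H; try contradiction; bad.
    + apply hd_inv in Hh.
      destruct Hh as [[x' [-> _]]|[Hh _]].
      * bad.
      * destruct (hd_app _ Hh) as [? [? ->]]. bad.
  - inversion HL; subst; constructor.
    apply IHred_v; auto. inversion HA; subst. inversion H0; subst; auto.
    apply hd_app in H1; destruct H1 as [? [? ?]]; discriminate.
    inversion H0.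
  - inversion HL; subst; constructor; auto using le'_refl.
    apply IHred_v; auto. apply A_app in HA.
    destruct HA as [[x [-> _]]|[[Hh _]|[a [-> [Ha _]]]]].
    + constructor; constructor.
    + apply hd_A; auto.
    + constructor; constructor; auto.
  - inversion HL; subst; constructor; auto using le'_refl.
    apply IHred_v; auto. apply A_app in HA.
    destruct HA as [[x [-> HB]]|[[Hh Ha]|[a [-> [Ha Hh]]]]].
    + constructor; auto.
    + auto.
    + apply hd_A; auto.
Qed.

Theorem lemma2p5 (M N A : term) :
  no_bot M -> no_bot N -> is_A A ->
  approx_le A M -> red_v M N -> approx_le A N.
Proof.
  intros _ _ HA HL HR. apply le'_to_approx.
  apply (key M N HR A HA). apply approx_to_le'; auto.
Qed.
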